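(* Let $(X,\|\cdot\|)$ be a normed linear space over $\mathbb{R}$ or $\mathbb{C}$, let $a\in X\setminus\{0\}$ and $x_1,\dots,x_n\in X\setminus\{0\}$ with $\|a\|\ge\|x_j-a\|$ for each $j\in\{1,\dots,n\}$. Then for any $p_1,\dots,p_n\ge0$ with $\sum_{j=1}^n p_j=1$, $$\frac{\big\|\sum_{j=1}^n p_jx_j\big\|}{\sum_{j=1}^n p_j\|x_j\|}\ \ge\ \frac12\min_{1\le j\le n}\left\{\frac{\|a\|^2-\|a-x_j\|^2}{\|x_j\|\,\|a\|}\right\}\ (\ge 0).$$ The constant $\tfrac12$ is best possible: if $X\neq\{0\}$, there is no constant $E>\tfrac12$ such that the inequality with $\tfrac12$ replaced by $E$ holds for all such $n$, $x_j$, $a$, $p_j$. *)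

(* Defs.v *)
From HB Require Import structures.
From mathcomp Require Import all_boot all_order all_algebra.
From mathcomp Require Import all_classical all_reals.
From mathcomp Require Import topology normedtype.
Set Implicit Arguments. Unset Strict Implicit. Unset Printing Implicit Defensive.
Import Order.TTheory GRing.Theory Num.Theory.
Local Open Scope ring_scope.

(* Minimum of a finite nonempty sequence of reals; the value on the empty
   sequence (0) is a dummy and is never used in the theorem, since there
   sum_j p_j = 1 forces n >= 1. *)
Definition seqmin (R : realDomainType) (s : seq R) : R :=
  match s with
  | [::] => 0
  | a :: s' => \big[Num.min/a]_(y <- s') y
  end.

Definition ordmin (R : realDomainType) (n : nat) (q : 'I_n -> R) : R :=
  seqmin [seq q j | j : 'I_n].

(* Main.v *)
Require Import Defs.
From HB Require Import structures.
From mathcomp Require Import all_boot all_order all_algebra.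
From mathcomp Require Import all_classical all_reals.
From mathcomp Require Import topology normedtype.
From mathcomp Require Import ring lra.
Import Order.TTheory GRing.Theory Num.Theory.
Import numFieldNormedType.Exports.
Local Open Scope ring_scope.

Lemma seqmin_le (R : realDomainType) (s : seq R) y : y \in s -> seqmin s <= y.
Proof.
case: s => // a s /=; elim: s a y => [|b s IH] a y.
  by rewrite inE big_nil => /eqP ->.
rewrite big_cons !inE => /orP [/eqP ->|/orP [/eqP ->|ys]].
- rewrite ge_min; apply/orP; right.
  by apply: (IH a a); rewrite inE eqxx.
- by rewrite ge_min lexx.
- rewrite ge_min; apply/orP; right.
  by apply: (IH a y); rewrite inE ys orbT.
Qed.

Lemma seqmin_ge (R : realDomainType) (s : seq R) c :
  s != [::] -> (forall y, y \in s -> c <= y) -> c <= seqmin s.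
Proof.
case: s => // a s _ /=; elim: s a => [|b s IH] a H.
  by rewrite big_nil; apply: H; rewrite inE eqxx.
rewrite big_cons le_min; apply/andP; split.
  by apply: H; rewrite !inE eqxx orbT.
apply: IH => y; rewrite inE => /orP [/eqP ->|ys]; apply: H.
  by rewrite inE eqxx.
by rewrite !inE ys !orbT.
Qed.

Lemma ordmin_le (R : realDomainType) n (q : 'I_n -> R) j : ordmin q <= q j.
Proof. by apply: seqmin_le; apply: map_f; rewrite mem_enum. Qed.

Lemma ordmin_ge (R : realDomainType) n (q : 'I_n -> R) c :
  (0 < n)%N -> (forall j, c <= q j) -> c <= ordmin q.
Proof.
move=> n0 H; apply: seqmin_ge.
  have : q (Ordinal n0) \in [seq q j | j : 'I_n] by apply: map_f; rewrite mem_enum.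
  by case: [seq q j | j : 'I_n].
by move=> y /mapP [j _ ->].
Qed.

Theorem theorem2p2 (R : realType) (V : normedModType R) :
  (forall (n : nat) (x : 'I_n -> V) (a : V) (p : 'I_n -> R),
      a != 0 ->
      (forall j, x j != 0) ->
      (forall j, `|x j - a| <= `|a|) ->
      (forall j, 0 <= p j) ->
      \sum_(j < n) p j = 1 ->
      0 <= ordmin (fun j => (`|a| ^+ 2 - `|a - x j| ^+ 2) / (`|x j| * `|a|)) /\
      2^-1 * ordmin (fun j => (`|a| ^+ 2 - `|a - x j| ^+ 2) / (`|x j| * `|a|))
        <= `|\sum_(j < n) p j *: x j| / (\sum_(j < n) p j * `|x j|))
  /\
  ((exists v : V, v != 0) ->
   forall E : R, 2^-1 < E ->
   ~ (forall (n : nat) (x : 'I_n -> V) (a : V) (p : 'I_n -> R),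
        a != 0 ->
        (forall j, x j != 0) ->
        (forall j, `|x j - a| <= `|a|) ->
        (forall j, 0 <= p j) ->
        \sum_(j < n) p j = 1 ->
        E * ordmin (fun j => (`|a| ^+ 2 - `|a - x j| ^+ 2) / (`|x j| * `|a|))
          <= `|\sum_(j < n) p j *: x j| / (\sum_(j < n) p j * `|x j|))).
Proof.
split.
  move=> n x a p a0 x0 xa p0 p1.
  have n0 : (0 < n)%N.
    case: n x p x0 xa p0 p1 => // x p _ _ _; rewrite big_ord0 => /eqP.
    by rewrite eq_sym oner_eq0.
  have A0 : 0 < `|a| by rewrite normr_gt0.
  have N0 j : 0 < `|x j| by rewrite normr_gt0.
  have B j : `|a - x j| <= `|a| by rewrite distrC.
  have B0 j : 0 <= `|a - x j| by [].
  set q := (fun j => _).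
  have q0 j : 0 <= q j.
    rewrite /q divr_ge0 // ?mulr_ge0 // subr_ge0.
    by rewrite ler_pXn2r // ?nnegrE.
  split; first by apply: ordmin_ge.
  set m := ordmin q.
  have key j : 2^-1 * m * `|x j| <= `|a| - `|a - x j|.
    have h1 : m * (`|x j| * `|a|) <= `|a| ^+ 2 - `|a - x j| ^+ 2.
      by rewrite -ler_pdivlMr ?mulr_gt0 //; apply: ordmin_le.
    have h2 : `|a| ^+ 2 - `|a - x j| ^+ 2 <= (`|a| - `|a - x j|) * (2 * `|a|).
      have := B j; have := B0 j; move: (`|a - x j|) (`|a|) => u v Hu Hv. nra.
    have : m * `|x j| * `|a| <= (`|a| - `|a - x j|) * 2 * `|a|.
      by rewrite -!mulrA; apply: le_trans h2.
    rewrite ler_pM2r // => h3.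
    rewrite -mulrA; move: h3; move: (m * `|x j|) => w; lra.
  have D0 : 0 < \sum_(j < n) p j * `|x j|.
    have [j pj] : exists j, 0 < p j.
      apply/existsP; rewrite -[X in is_true X]negbK; apply/negP; rewrite negb_exists => /forallP H.
      have : \sum_(j < n) p j <= 0 by apply: sumr_le0 => i _; rewrite leNgt H.
      by rewrite p1 ler10.
    rewrite (bigD1 j) //=; apply: (lt_le_trans (y := p j * `|x j|)); first by rewrite mulr_gt0.
    by rewrite lerDl; apply: sumr_ge0 => i _; rewrite mulr_ge0.
  rewrite ler_pdivlMr //.
  have S1 : \sum_(j < n) p j * (2^-1 * m * `|x j|) <= \sum_(j < n) p j * (`|a| - `|a - x j|).
    by apply: ler_sum => j _; rewrite ler_wpM2l.
  have E1 : \sum_(j < n) p j * (2^-1 * m * `|x j|) = 2^-1 * m * \sum_(j < n) p j * `|x j|.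
    by rewrite mulr_sumr; apply: eq_bigr => j _; rewrite mulrCA mulrA [_ * p j]mulrC.
  have E2 : \sum_(j < n) p j * (`|a| - `|a - x j|) = `|a| - \sum_(j < n) `|p j *: (a - x j)|.
    rewrite -[X in X - _]mul1r -p1 mulr_suml -sumrB; apply: eq_bigr => j _.
    by rewrite normrZ ger0_norm // mulrBr.
  have E3 : \sum_(j < n) p j *: (a - x j) = a - \sum_(j < n) p j *: x j.
    by rewrite -[X in X - _]scale1r -p1 scaler_suml -sumrB; apply: eq_bigr => j _; rewrite scalerBr.
  have T1 : `|\sum_(j < n) p j *: (a - x j)| <= \sum_(j < n) `|p j *: (a - x j)| := ler_norm_sum _ _ _.
  rewrite E3 in T1; rewrite E1 E2 in S1.
  set S := \sum_(j < n) p j *: x j in T1 *.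
  have T2 := ler_normD (a - S) S; rewrite subrK in T2.
  move: T1 T2 S1; move: (\sum_(j < n) `|p j *: (a - x j)|) (2^-1 * m * \sum_(j < n) p j * `|x j|) => u w.
  lra.
have hlra : forall e : R, 2^-1 < e -> 1 < e * 2 - (e - 2^-1) by move=> e; lra.
move=> [v v0] E hE H.
have E0 : 0 < E by apply: lt_trans hE; rewrite invr_gt0.
have N0 : 0 < `|v| by rewrite normr_gt0.
set t := 1 - (2 * E)^-1.
have t0 : 0 < t.
  have h2E : 1 < 2 * E by lra.
  by rewrite /t subr_gt0 invf_lt1 ?mulr_gt0.
have t1 : t <= 1 by rewrite /t lerBlDr lerDl invr_ge0 mulr_ge0 // ltW.
have Et : E * t = E - 2^-1.
  by rewrite /t mulrBr mulr1 invfM mulrA mulrC mulrA mulVf ?gt_eqF // mul1r.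
have nv1 : `|v - t *: v| = (1 - t) * `|v|.
  by rewrite -{1}(scale1r v) -scalerBl normrZ ger0_norm // subr_ge0.
have nv2 : `|t *: v| = t * `|v| by rewrite normrZ ger0_norm // ltW.
have := H 1%N (fun _ => t *: v) v (fun _ => 1) v0.
have -> : `|\sum_(j < 1) 1 *: (t *: v)| / (\sum_(j < 1) 1 * `|t *: v|) = 1.
  by rewrite !big_ord1 scale1r mul1r divff // gt_eqF // nv2 mulr_gt0.
have Hq : 2 - t <= ordmin (fun j : 'I_1 => (`|v| ^+ 2 - `|v - t *: v| ^+ 2) / (`|t *: v| * `|v|)).
  apply: ordmin_ge => // j.
  rewrite nv1 nv2 ler_pdivlMr ?mulr_gt0 //.
  rewrite le_eqVlt; apply/orP; left; apply/eqP.
  by rewrite !expr2; ring.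
move=> /(_ _ _ _ _) H'.
have : 1 < E * ordmin (fun j : 'I_1 => (`|v| ^+ 2 - `|v - t *: v| ^+ 2) / (`|t *: v| * `|v|)).
  apply: (lt_le_trans (y := E * (2 - t))); last by rewrite ler_pM2l.
  by rewrite mulrBr Et; apply: hlra.
rewrite ltNge H' //.
- by move=> _; rewrite scaler_eq0 negb_or v0 andbT gt_eqF.
- by move=> _; rewrite distrC nv1 ler_piMl ?ltW // ?subr_ge0 // ltrBlDr ltrDl.
- by rewrite big_ord1.
Qed.
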